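(* Let $(p_1,\beta_1),\dots,(p_K,\beta_K)$ be pairwise distinct points with $0<p_k<1$ and $0<\beta_k\le\pi/2$. For each $k$ define $F_k:[0,1]\to[0,\pi/2]$ by $$F_k(A)=\begin{cases}0,& A\le p_k,\\[2pt] \dfrac{\pi}{2}-\arccos\dfrac{\sqrt{A^2-p_k^2}}{\sin\beta_k\sqrt{1-p_k^2}},& p_k<A<\sqrt{\sin^2\beta_k+p_k^2\cos^2\beta_k},\\[6pt] \dfrac{\pi}{2},& A\ge\sqrt{\sin^2\beta_k+p_k^2\cos^2\beta_k}.\end{cases}$$ Then $F_1,\dots,F_K$ are linearly independent functions on $[0,1]$. Consequently, for any function $C$ on $[0,1]$ of the form $C(A)=\sum_{k=1}^K w_kF_k(A)$, the weights $w_1,\dots,w_K$ are uniquely determined by $C$.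
   Context: Bin model: the population is divided into bins, each bin $k$ consisting of biaxial ellipsoids with elongation $p_k$ and spin latitude $\beta_k$ (spin longitudes and viewing longitudes isotropic, viewing directions in the reference plane), with occupation number $w_k$. $F_k$ is the corresponding contribution to the cumulative distribution function $C(A)$ of the inverse amplitude $A$. *)

(* Defs.v *)
From Stdlib Require Import Reals Lra.
Open Scope R_scope.

Fixpoint fsum (f : nat -> R) (n : nat) : R :=
  match n with
  | O => 0
  | S m => fsum f m + f m
  end.

Definition Athr (p beta : R) : R :=
  sqrt (sin beta ^ 2 + p ^ 2 * cos beta ^ 2).

Definition Fbin (p beta A : R) : R :=
  if Rle_dec A p then 0
  else if Rlt_dec A (Athr p beta) then
    PI / 2 - acos (sqrt (A ^ 2 - p ^ 2) / (sin beta * sqrt (1 - p ^ 2)))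
  else PI / 2.

(* Main.v *)
Require Import Defs.
From Stdlib Require Import Reals Lra Lia Classical.
From Coquelicot Require Import Coquelicot.
Open Scope R_scope.

Lemma fsum_ext (f g : nat -> R) K :
  (forall k, (k < K)%nat -> f k = g k) -> fsum f K = fsum g K.
Proof.
  induction K; intros H; simpl; auto.
  rewrite IHK; [rewrite H; auto|intros; apply H; lia].
Qed.

Lemma fsum_sub (w w' F : nat -> R) K :
  fsum (fun k => (w k - w' k) * F k) K =
  fsum (fun k => w k * F k) K - fsum (fun k => w' k * F k) K.
Proof. induction K; simpl; [ring|rewrite IHK; ring]. Qed.

Lemma fsum_scal a (f : nat -> R) K :
  fsum (fun k => a * f k) K = a * fsum f K.
Proof. induction K; simpl; [ring|rewrite IHK; ring]. Qed.

Lemma fsum_vdm (d t : nat -> R) a n K :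
  fsum (fun k => d k * (t k - a) * t k ^ n) K =
  fsum (fun k => d k * t k ^ S n) K - a * fsum (fun k => d k * t k ^ n) K.
Proof. induction K; simpl; [ring|rewrite IHK; simpl; ring]. Qed.

Lemma fsum_zero (f : nat -> R) K :
  (forall k, (k < K)%nat -> f k = 0) -> fsum f K = 0.
Proof.
  intros H. rewrite (fsum_ext f (fun _ => 0)); auto.
  clear H; induction K; simpl; auto; rewrite IHK; ring.
Qed.

Lemma vdm K : forall (d t : nat -> R),
  (forall i j, (i < K)%nat -> (j < K)%nat -> i <> j -> d i <> 0 -> d j <> 0 -> t i <> t j) ->
  (forall n, fsum (fun k => d k * t k ^ n) K = 0) ->
  forall k, (k < K)%nat -> d k = 0.
Proof.
  induction K as [|m IH]; intros d t Hd Hs k Hk; [lia|].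
  assert (Hm : d m = 0).
  { apply NNPP; intro Hm.
    assert (Hlow : forall k, (k < m)%nat -> d k = 0).
    { intros j Hj.
      assert (H' : d j * (t j - t m) = 0).
      { apply (IH (fun k => d k * (t k - t m)) t).
        - intros i i' Hi Hi' Hne H1 H2. apply Hd; try lia; auto.
          + intro E; apply H1; rewrite E; ring.
          + intro E; apply H2; rewrite E; ring.
        - intros n. rewrite fsum_vdm.
          pose proof (Hs n) as E1; pose proof (Hs (S n)) as E2. simpl in E1, E2.
          simpl. nra.
        - auto. }
      destruct (Req_dec (d j) 0) as [E|E]; auto.
      exfalso. assert (t j <> t m) by (apply Hd; auto; lia).
      apply Rmult_integral in H'; destruct H'; [contradiction|lra]. }
    apply Hm. pose proof (Hs 0%nat) as E. simpl in E.
    rewrite fsum_zero in E; [lra|]. intros j Hj; rewrite Hlow; auto; ring. }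
  destruct (Nat.eq_dec k m); [subst; auto|].
  apply (IH d t).
  - intros; apply Hd; auto; lia.
  - intros q; pose proof (Hs q) as E; simpl in E; rewrite Hm in E; lra.
  - lia.
Qed.

Lemma is_derive_fsum K (f : nat -> R -> R) (df : nat -> R) x :
  (forall k, (k < K)%nat -> is_derive (f k) x (df k)) ->
  is_derive (fun y => fsum (fun k => f k y) K) x (fsum df K).
Proof.
  induction K; intros H; simpl.
  - apply (is_derive_const 0 x).
  - apply (is_derive_plus (fun y => fsum (fun k => f k y) K) (f K)).
    + apply IHK; intros; apply H; lia.
    + apply H; lia.
Qed.

Lemma dz (f : R -> R) a b x l :
  a < x < b -> (forall y, a < y < b -> f y = 0) -> is_derive f x l -> l = 0.
Proof.
  intros Hx Hf Hl.
  assert (H0 : is_derive f x 0).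
  { apply (is_derive_ext_loc (fun _ => 0)).
    - assert (Hp : 0 < Rmin (x - a) (b - x)) by (apply Rmin_glb_lt; lra).
      exists (mkposreal _ Hp). intros y Hy.
      unfold ball in Hy; simpl in Hy; unfold AbsRing_ball, abs, minus, plus, opp in Hy; simpl in Hy.
      apply Rabs_def2 in Hy. pose proof (Rmin_l (x-a) (b-x)); pose proof (Rmin_r (x-a) (b-x)).
      symmetry; apply Hf; lra.
    - apply (is_derive_const 0 x). }
  apply is_derive_unique in Hl; apply is_derive_unique in H0. rewrite <- Hl, H0; auto.
Qed.

Lemma der_zero (f : R -> R) x l : is_derive (fun A => 0 * f A) x (0 * l).
Proof.
  apply (is_derive_ext (fun _ => 0)). { intros; simpl; ring. }
  replace (0 * l) with 0 by ring. apply (is_derive_const 0 x).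
Qed.

Lemma der_h c g n x : 0 < g - x^2 ->
  is_derive (fun A => c * (/ sqrt (g - A^2))^(2*n+1)) x
     (c * (INR (2*n+1) * x * (/ sqrt (g - x^2))^(2*(S n)+1))).
Proof.
  intros H. auto_derive.
  - repeat split; try nra. apply Rgt_not_eq, sqrt_lt_R0; nra.
  - assert (Hs : 0 < sqrt (g + - (x * (x * 1)))) by (apply sqrt_lt_R0; nra).
    replace (g - x^2) with (g + - (x * (x * 1))) by ring.
    set (s := sqrt (g + - (x * (x * 1)))) in *.
    replace (Init.Nat.pred (2 * n + 1)) with (2*n)%nat by lia.
    replace (2 * S n + 1)%nat with (2*n + 3)%nat by lia.
    rewrite pow_add. simpl. replace (Init.Nat.pred (n + (n + 0) + 1)) with (n + (n+0))%nat by lia. set (T := (/ s) ^ (n + (n + 0))). field. lra.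
Qed.

Definition gam (p beta : R) := sin beta ^ 2 + p ^ 2 * cos beta ^ 2.

Lemma sin_pos b : 0 < b <= PI / 2 -> 0 < sin b.
Proof. intros; apply sin_gt_0; pose proof PI_RGT_0; lra. Qed.

Lemma gam_eq p b : gam p b = p^2 + (sin b)^2 * (1 - p^2).
Proof.
  unfold gam. pose proof (sin2_cos2 b) as H. unfold Rsqr in H. simpl in *. nra.
Qed.

Lemma Athr_gt p b : 0 < p < 1 -> 0 < b <= PI/2 -> p < Athr p b.
Proof.
  intros Hp Hb. unfold Athr. fold (gam p b). rewrite gam_eq.
  pose proof (sin_pos b Hb). set (g := p ^ 2 + sin b ^ 2 * (1 - p ^ 2)).
  assert (0 < sin b ^2 * (1-p^2)) by (apply Rmult_lt_0_compat; [apply pow_lt|]; nra).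
  assert (Hg : p^2 < g) by (unfold g; lra).
  pose proof (sqrt_sqrt g ltac:(nra)). pose proof (sqrt_pos g).
  simpl in *. destruct (Rlt_le_dec p (sqrt g)) as [|L]; auto.
  assert (sqrt g * sqrt g <= p * p) by (apply Rmult_le_compat; lra). nra.
Qed.

Lemma lt_Athr p b A : 0 < A -> A < Athr p b -> A^2 < gam p b.
Proof.
  unfold Athr; fold (gam p b); intros HA H.
  assert (0 <= gam p b).
  { destruct (Rle_lt_dec 0 (gam p b)); auto. rewrite sqrt_neg_0 in H; lra. }
  pose proof (sqrt_sqrt _ H0). simpl. nra.
Qed.

Lemma gam_inj p b1 b2 : 0 < p < 1 -> 0 < b1 <= PI/2 -> 0 < b2 <= PI/2 ->
  gam p b1 = gam p b2 -> b1 = b2.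
Proof.
  intros Hp H1 H2 E. rewrite !gam_eq in E.
  pose proof (sin_pos _ H1); pose proof (sin_pos _ H2).
  assert (Es : sin b1 = sin b2).
  { assert (E2 : sin b1 ^ 2 = sin b2 ^ 2).
    { apply Rmult_eq_reg_r with (1 - p^2); [lra|]. simpl; nra. }
    simpl in E2. assert ((sin b1 - sin b2) * (sin b1 + sin b2) = 0) by nra.
    apply Rmult_integral in H3; destruct H3; lra. }
  pose proof PI_RGT_0.
  destruct (total_order_T b1 b2) as [[L|L]|L]; auto.
  - pose proof (sin_increasing_1 b1 b2 ltac:(lra) ltac:(lra) ltac:(lra) ltac:(lra) L); lra.
  - pose proof (sin_increasing_1 b2 b1 ltac:(lra) ltac:(lra) ltac:(lra) ltac:(lra) L); lra.
Qed.

Lemma der_G p b A : 0 < p < 1 -> 0 < b <= PI/2 -> p < A -> A^2 < gam p b ->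
  is_derive (fun A => PI/2 - acos (sqrt (A^2 - p^2) / (sin b * sqrt (1 - p^2)))) A
    (A / sqrt (A^2 - p^2) * (/ sqrt (gam p b - A^2))^(2*0+1)).
Proof.
  intros Hp Hb HA Hg.
  pose proof (sin_pos _ Hb) as Hsb.
  assert (Hq : 0 < sqrt (1 - p^2)) by (apply sqrt_lt_R0; nra).
  set (bb := sin b * sqrt (1 - p^2)).
  assert (Hbb : 0 < bb) by (unfold bb; nra).
  assert (Hbb2 : bb * bb = sin b ^ 2 * (1 - p^2)).
  { unfold bb. replace (sin b * sqrt (1 - p ^ 2) * (sin b * sqrt (1 - p ^ 2))) with
      (sin b * sin b * (sqrt (1 - p ^ 2) * sqrt (1 - p ^ 2))) by ring.
    rewrite sqrt_sqrt by nra. ring. }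
  rewrite gam_eq in *.
  set (x := sqrt (A^2 - p^2) / bb).
  assert (HS : 0 < sqrt (A^2 - p^2)) by (apply sqrt_lt_R0; nra).
  pose proof (sqrt_sqrt (A^2 - p^2) ltac:(nra)) as HSS.
  assert (Hx : -1 < x < 1).
  { unfold x; split.
    - apply Rlt_le_trans with 0; [lra|]. apply Rle_div_r; lra.
    - apply Rlt_div_l; [lra|]. nra. }
  assert (Hdx : is_derive (fun A => sqrt (A^2 - p^2) / bb) A (A / (bb * sqrt (A^2 - p^2)))).
  { auto_derive.
    - nra.
    - replace (A * (A * 1) + - (p * (p * 1))) with (A^2 - p^2) by ring. field. lra. }
  assert (Hda : is_derive acos x (-1 / sqrt (1 - x²))).
  { apply is_derive_Reals. apply (derive_pt_eq_1 _ _ _ (derivable_pt_acos x Hx)).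
    apply derive_pt_acos. }
  assert (Hsq : sqrt (1 - x²) * bb = sqrt (p ^ 2 + sin b ^ 2 * (1 - p ^ 2) - A ^ 2)).
  { rewrite <- (sqrt_square bb) by lra.
    unfold Rsqr; rewrite <- sqrt_mult.
    - f_equal. unfold x. field_simplify; [|lra]. replace (sqrt (A^2-p^2)^2) with (A^2-p^2) by nra. replace (bb^2) with (bb*bb) by ring. rewrite Hbb2. ring.
    - unfold Rsqr in Hx |- *. nra.
    - nra. }
  assert (H1x : 0 < sqrt (1 - x²)) by (apply sqrt_lt_R0; unfold Rsqr; nra).
  pose proof (is_derive_comp acos (fun A => sqrt (A^2 - p^2) / bb) A _ _ Hda Hdx) as Hc.
  pose proof (is_derive_minus (fun _ => PI/2) _ A _ _ (is_derive_const (PI/2) A) Hc) as Hm.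
  match type of Hm with is_derive _ _ ?v =>
    replace (A / sqrt (A ^ 2 - p ^ 2) * (/ sqrt (p ^ 2 + sin b ^ 2 * (1 - p ^ 2) - A ^ 2)) ^ (2 * 0 + 1)) with v end.
  - eapply is_derive_ext; [|exact Hm]. intros; simpl. unfold minus, plus, opp; simpl. ring.
  - rewrite <- Hsq. unfold minus, plus, opp, scal, zero; simpl. unfold mult; simpl.
    field. replace (A * (A * 1) - p * (p * 1)) with (A^2 - p^2) by ring. repeat split; lra.
Qed.

Lemma S_all K (c g : nat -> R) a b : 0 < a ->
  (forall A k, a < A < b -> (k < K)%nat -> c k <> 0 -> A^2 < g k) ->
  (forall A, a < A < b -> fsum (fun k => c k * (/ sqrt (g k - A^2))^(2*0+1)) K = 0) ->
  forall n A, a < A < b -> fsum (fun k => c k * (/ sqrt (g k - A^2))^(2*n+1)) K = 0.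
Proof.
  intros Ha Hg H0 n; induction n as [|n IH]; [exact H0|].
  intros A HA.
  assert (Hd : is_derive (fun y => fsum (fun k => (fun k y => c k * (/ sqrt (g k - y^2))^(2*n+1)) k y) K) A
     (fsum (fun k => c k * (INR (2*n+1) * A * (/ sqrt (g k - A^2))^(2*(S n)+1))) K)).
  { apply is_derive_fsum. intros k Hk.
    destruct (Req_dec (c k) 0) as [E|E].
    - rewrite E. apply der_zero.
    - apply der_h. specialize (Hg A k HA Hk E). lra. }
  pose proof (dz _ a b A _ HA IH Hd) as Z.
  rewrite (fsum_ext _ (fun k => (INR (2*n+1) * A) * (c k * (/ sqrt (g k - A^2))^(2*(S n)+1)))) in Z
    by (intros; ring).
  rewrite fsum_scal in Z. apply Rmult_integral in Z. destruct Z as [Z|Z]; auto.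
  exfalso. assert (0 < INR (2*n+1)) by (apply lt_0_INR; lia). nra.
Qed.

Lemma exists_min K (P : nat -> Prop) (v : nat -> R) :
  (exists k, (k < K)%nat /\ P k) ->
  exists k0, (k0 < K)%nat /\ P k0 /\ forall k, (k < K)%nat -> P k -> v k0 <= v k.
Proof.
  induction K as [|m IH]; intros [k [Hk Pk]]; [lia|].
  destruct (classic (exists k, (k < m)%nat /\ P k)) as [Hex|Hno].
  - destruct (IH Hex) as [k0 [H1 [H2 H3]]].
    destruct (classic (P m /\ v m < v k0)) as [[Pm Lm]|Nm].
    + exists m; repeat split; auto. intros j Hj Pj.
      destruct (Nat.eq_dec j m); [subst; lra|]. specialize (H3 j ltac:(lia) Pj); lra.
    + exists k0; repeat split; auto. intros j Hj Pj.
      destruct (Nat.eq_dec j m); [subst|apply H3; auto; lia].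
      destruct (Rle_lt_dec (v k0) (v m)); auto. exfalso; apply Nm; auto.
  - assert (k = m) by (destruct (Nat.eq_dec k m); auto; exfalso; apply Hno; exists k; split; auto; lia).
    subst. exists m; repeat split; auto. intros j Hj Pj.
    destruct (Nat.eq_dec j m); [subst; lra|]. exfalso; apply Hno; exists j; split; auto; lia.
Qed.

Lemma exists_delta K (P : nat -> Prop) (v : nat -> R) x :
  (forall k, (k < K)%nat -> P k -> x < v k) ->
  exists d, x < d /\ forall k, (k < K)%nat -> P k -> d <= v k.
Proof.
  induction K as [|m IH]; intros H.
  - exists (x + 1); split; [lra|]; intros; lia.
  - destruct IH as [d [Hd1 Hd2]]; [intros; apply H; auto; lia|].
    destruct (classic (P m)) as [Pm|Pm].
    + exists (Rmin d (v m)); split.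
      * apply Rmin_glb_lt; auto; apply H; auto.
      * intros k Hk Pk. destruct (Nat.eq_dec k m); [subst; apply Rmin_r|].
        apply Rle_trans with d; [apply Rmin_l|apply Hd2; auto; lia].
    + exists d; split; auto. intros k Hk Pk. destruct (Nat.eq_dec k m); [subst; contradiction|].
      apply Hd2; auto; lia.
Qed.

Lemma indep (K : nat) (p beta : nat -> R)
  (hp : forall k, (k < K)%nat -> 0 < p k < 1)
  (hbeta : forall k, (k < K)%nat -> 0 < beta k <= PI / 2)
  (hdist : forall i j, (i < K)%nat -> (j < K)%nat -> i <> j ->
           (p i, beta i) <> (p j, beta j))
  (w : nat -> R)
  (Hw : forall A, 0 <= A <= 1 -> fsum (fun k => w k * Fbin (p k) (beta k) A) K = 0) :
  forall k, (k < K)%nat -> w k = 0.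
Proof.
  intros k Hk. apply NNPP; intro Hwk.
  destruct (exists_min K (fun k => w k <> 0) p) as [k0 [Hk0 [Hw0 Hmin]]]; [eauto|].
  set (p0 := p k0).
  destruct (exists_delta K (fun k => p0 <= p k)
     (fun k => if Req_EM_T (p k) p0 then Athr (p k) (beta k) else p k) p0) as [d [Hd1 Hd2]].
  { intros j Hj Hpj. destruct (Req_EM_T (p j) p0) as [E|E].
    - rewrite <- E. apply Athr_gt; auto.
    - lra. }
  assert (Hp0 : 0 < p0 < 1) by (apply hp; auto).
  set (b := Rmin d 1).
  assert (Hb1 : p0 < b) by (apply Rmin_glb_lt; lra).
  assert (Hb2 : b <= d) by apply Rmin_l.
  assert (Hb3 : b <= 1) by apply Rmin_r.
  set (c := fun k => if Req_EM_T (p k) p0 then w k else 0).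
  set (g := fun k => gam (p k) (beta k)).
  assert (Hc : forall k, (k < K)%nat -> c k <> 0 -> p k = p0).
  { intros j Hj. unfold c; destruct (Req_EM_T (p j) p0); auto; lra. }
  assert (HgA : forall A k, p0 < A < b -> (k < K)%nat -> c k <> 0 -> A^2 < g k).
  { intros A j HA Hj Hcj. pose proof (Hc j Hj Hcj) as E.
    specialize (Hd2 j Hj ltac:(lra)). destruct (Req_EM_T (p j) p0) as [_|]; [|contradiction].
    apply lt_Athr; lra. }
  assert (Step1 : forall A, p0 < A < b ->
     fsum (fun k => c k * (PI/2 - acos (sqrt (A^2 - p k^2) / (sin (beta k) * sqrt (1 - p k^2))))) K = 0).
  { intros A HA. rewrite <- (Hw A) by lra. apply fsum_ext. intros j Hj.
    unfold c. destruct (Req_EM_T (p j) p0) as [E|E].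
    - unfold Fbin. destruct (Rle_dec A (p j)); [lra|].
      destruct (Rlt_dec A (Athr (p j) (beta j))) as [|L]; auto.
      exfalso. specialize (Hd2 j Hj ltac:(lra)). destruct (Req_EM_T (p j) p0); [lra|contradiction].
    - destruct (Req_dec (w j) 0) as [Z|Z]; [rewrite Z; ring|].
      specialize (Hmin j Hj Z). fold p0 in Hmin.
      specialize (Hd2 j Hj Hmin). destruct (Req_EM_T (p j) p0); [contradiction|].
      unfold Fbin. destruct (Rle_dec A (p j)); [ring|lra]. }
  assert (Step2 : forall A, p0 < A < b ->
     fsum (fun k => c k * (/ sqrt (g k - A^2))^(2*0+1)) K = 0).
  { intros A HA.
    assert (Hd : is_derive (fun y => fsum (fun k => (fun k y => c k * (PI/2 - acos (sqrt (y^2 - p k^2) / (sin (beta k) * sqrt (1 - p k^2))))) k y) K) A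
       (fsum (fun k => c k * (A / sqrt (A^2 - p0^2) * (/ sqrt (g k - A^2))^(2*0+1))) K)).
    { apply is_derive_fsum. intros j Hj.
      destruct (Req_dec (c j) 0) as [E|E].
      - rewrite E. apply der_zero.
      - apply is_derive_scal. rewrite <- (Hc j Hj E). apply der_G; auto.
        + rewrite (Hc j Hj E); lra.
        + apply HgA; auto. }
    pose proof (dz _ p0 b A _ HA Step1 Hd) as Z.
    rewrite (fsum_ext _ (fun k => (A / sqrt (A^2 - p0^2)) * (c k * (/ sqrt (g k - A^2))^(2*0+1)))) in Z
      by (intros; ring).
    rewrite fsum_scal in Z. apply Rmult_integral in Z. destruct Z as [Z|Z]; auto.
    exfalso. assert (0 < sqrt (A^2 - p0^2)) by (apply sqrt_lt_R0; nra).
    assert (0 < A / sqrt (A^2 - p0^2)) by (apply Rdiv_lt_0_compat; lra). lra. }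
  pose proof (S_all K c g p0 b ltac:(lra) HgA Step2) as Sn.
  set (A0 := (p0 + b) / 2).
  assert (HA0 : p0 < A0 < b) by (unfold A0; lra).
  set (s := fun k => / sqrt (g k - A0^2)).
  assert (Hv := vdm K (fun k => c k * s k) (fun k => s k ^ 2)).
  assert (Hck : c k0 * s k0 = 0).
  { apply Hv; auto.
    - intros i j Hi Hj Hij Hdi Hdj Ht.
      assert (Hci : c i <> 0) by (intro E; apply Hdi; rewrite E; ring).
      assert (Hcj : c j <> 0) by (intro E; apply Hdj; rewrite E; ring).
      pose proof (HgA A0 i HA0 Hi Hci); pose proof (HgA A0 j HA0 Hj Hcj).
      assert (Hsi : 0 < sqrt (g i - A0^2)) by (apply sqrt_lt_R0; lra).
      assert (Hsj : 0 < sqrt (g j - A0^2)) by (apply sqrt_lt_R0; lra).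
      unfold s in Ht.
      assert (E1 : sqrt (g i - A0^2) = sqrt (g j - A0^2)).
      { assert (0 < / sqrt (g i - A0 ^ 2)) by (apply Rinv_0_lt_compat; lra).
        assert (0 < / sqrt (g j - A0 ^ 2)) by (apply Rinv_0_lt_compat; lra).
        assert (/ sqrt (g i - A0 ^ 2) = / sqrt (g j - A0 ^ 2)).
        { assert (Q : (/ sqrt (g i - A0 ^ 2) - / sqrt (g j - A0 ^ 2)) *
            (/ sqrt (g i - A0 ^ 2) + / sqrt (g j - A0 ^ 2)) = 0) by nra.
          apply Rmult_integral in Q; destruct Q; lra. }
        rewrite <- (Rinv_inv (sqrt (g i - A0^2))), <- (Rinv_inv (sqrt (g j - A0^2))). f_equal; auto. }
      apply sqrt_inj in E1; try lra.
      assert (Ep : p i = p j) by (rewrite (Hc i Hi Hci), (Hc j Hj Hcj); auto).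
      unfold g in E1. rewrite Ep in E1.
      assert (E2 : gam (p j) (beta i) = gam (p j) (beta j)) by lra.
      apply gam_inj in E2; auto. apply (hdist i j Hi Hj Hij). rewrite Ep, E2; auto.
    - intros n. rewrite <- (Sn n A0 HA0). apply fsum_ext. intros j Hj. unfold s.
      rewrite <- pow_mult. replace (2*n+1)%nat with (S (2*n)) by lia. match goal with |- _ = _ * ?x ^ S ?m => change (x ^ S m) with (x * x ^ m) end; ring. }
  assert (Hck0 : c k0 = w k0) by (unfold c; destruct (Req_EM_T (p k0) p0); auto; exfalso; apply n; reflexivity).
  apply Hw0. rewrite <- Hck0.
  assert (HcA : c k0 <> 0 -> False).
  { intros Hne. pose proof (HgA A0 k0 HA0 Hk0 Hne).
    assert (0 < sqrt (g k0 - A0^2)) by (apply sqrt_lt_R0; lra).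
    assert (0 < s k0) by (apply Rinv_0_lt_compat; lra).
    apply Rmult_integral in Hck; destruct Hck; lra. }
  destruct (Req_dec (c k0) 0); auto. contradiction (HcA H).
Qed.

Theorem theorem2 (K : nat) (p beta : nat -> R)
  (hp : forall k, (k < K)%nat -> 0 < p k < 1)
  (hbeta : forall k, (k < K)%nat -> 0 < beta k <= PI / 2)
  (hdist : forall i j, (i < K)%nat -> (j < K)%nat -> i <> j ->
           (p i, beta i) <> (p j, beta j)) :
  (* linear independence of F_1..F_K as functions on [0,1] *)
  (forall w : nat -> R,
     (forall A, 0 <= A <= 1 -> fsum (fun k => w k * Fbin (p k) (beta k) A) K = 0) ->
     forall k, (k < K)%nat -> w k = 0)
  /\
  (* consequently: the weights are determined by C *)
  (forall w w' : nat -> R,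
     (forall A, 0 <= A <= 1 ->
        fsum (fun k => w k * Fbin (p k) (beta k) A) K =
        fsum (fun k => w' k * Fbin (p k) (beta k) A) K) ->
     forall k, (k < K)%nat -> w k = w' k).
Proof.
  split.
  - intros w Hw. exact (indep K p beta hp hbeta hdist w Hw).
  - intros w w' H k Hk.
    assert (E : w k - w' k = 0).
    { apply (indep K p beta hp hbeta hdist (fun k => w k - w' k)); auto.
      intros A HA. rewrite (fsum_sub w w' (fun k => Fbin (p k) (beta k) A)).
      rewrite (H A HA). ring. }
    lra.
Qed.
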